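(* Assume $-1\in\mathbb F^2$ and let $J=JCK(Z,\delta)$, with $Z$-basis $\{1,v_1,v_2,v_3\}$ of $J_{\bar0}$ and $\{y,y_1,y_2,y_3\}$ of $J_{\bar1}$ as in the context. Then there is an injective group homomorphism from the symmetric group $S_4$ into the automorphism group of $J$ (with image consisting of even $Z$-linear automorphisms) such that: $\tau_1=(1\,2)(3\,4)$ acts as the identity on $J^{[\bar0,\bar0]}\oplus J^{[\bar1,\bar1]}$ and as $-1$ on $J^{[\bar1,\bar0]}\oplus J^{[\bar0,\bar1]}$; $\tau_2=(2\,3)(4\,1)$ acts as the identity on $J^{[\bar0,\bar0]}\oplus J^{[\bar1,\bar0]}$ and as $-1$ on $J^{[\bar0,\bar1]}\oplus J^{[\bar1,\bar1]}$; $\varphi=(1\,2\,3)$ acts as the $Z$-linear map with $\varphi(1)=1$, $\varphi(y)=y$, $\varphi(v_i)=v_{i+1}$, $\varphi(y_i)=y_{i+1}$ (indices mod 3); $\tau=(1\,2)$ acts as the $Z$-linear map with $\tau(1)=1$, $\tau(y)=y$, $\tau(v_1)=-v_2$, $\tau(v_2)=-v_1$, $\tau(v_3)=-v_3$, $\tau(y_1)=-y_2$, $\tau(y_2)=-y_1$, $\tau(y_3)=-y_3$.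
   Context: Let $\mathbb F$ be a field of characteristic $\neq 2$, $Z$ a unital commutative associative $\mathbb F$-algebra, and $\delta$ a derivation of $Z$ such that $Z\delta(Z)=Z$ (the $\mathbb F$-span of all products $f\delta(g)$, $f,g\in Z$, is $Z$). The Cheng-Kac Jordan superalgebra $J=JCK(Z,\delta)=J_{\bar0}\oplus J_{\bar1}$ is defined as follows: $J_{\bar0}=Z1\oplus Zw_1\oplus Zw_2\oplus Zw_3$ and $J_{\bar1}=Zx\oplus Zx_1\oplus Zx_2\oplus Zx_3$ are free $Z$-modules of rank 4; $J_{\bar0}$ is the $Z$-algebra $(\mathbb F1\oplus\mathbb Fw_1\oplus\mathbb Fw_2\oplus\mathbb Fw_3)\otimes_{\mathbb F}Z$ with $1$ the identity, $w_1^2=w_2^2=1$, $w_3^2=-1$, $w_iw_j=0$ for $i\ne j$. For $f,g\in Z$ and $i,j\in\{1,2,3\}$ the remaining products are: $f(gx)=(fg)x$, $f(gx_j)=(fg)x_j$, $(fw_i)(gx)=(\delta(f)g)x_i$, $(fw_i)(gx_j)=-(fg)x_{i\times j}$, $(fx)(gx)=\delta(f)g-f\delta(g)$, $(fx)(gx_j)=-(fg)w_j$, $(fx_i)(gx)=(fg)w_i$, $(fx_i)(gx_j)=0$, extended by supercommutativity ($ab=(-1)^{|a||b|}ba$), where $x_{1\times2}=-x_{2\times1}=x_3$, $x_{1\times3}=-x_{3\times1}=x_2$, $x_{3\times2}=-x_{2\times3}=x_1$, $x_{i\times i}=0$. $J$ is $\mathbb Z_2^2$-graded by $J^{[\bar0,\bar0]}=Z\oplus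 Zx$, $J^{[\bar1,\bar0]}=Zw_1\oplus Zx_1$, $J^{[\bar0,\bar1]}=Zw_2\oplus Zx_2$, $J^{[\bar1,\bar1]}=Zw_3\oplus Zx_3$. When $-1\in\mathbb F^2$, fix $\sqrt{-1}\in\mathbb F$ and set $v_1=\sqrt{-1}w_1$, $v_2=\sqrt{-1}w_2$, $v_3=w_3$, $y=x$, $y_1=\sqrt{-1}x_1$, $y_2=\sqrt{-1}x_2$, $y_3=x_3$. *)

(* Defs.v *)
From HB Require Import structures.
From mathcomp Require Import all_boot all_order all_algebra all_fingroup.
Set Implicit Arguments. Unset Strict Implicit. Unset Printing Implicit Defensive.
Import GRing.Theory.
Local Open Scope ring_scope.

(* E1 = 1, W1 W2 W3 = w_1 w_2 w_3 (even), X = x, X1 X2 X3 = x_1 x_2 x_3 (odd) *)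
Inductive CKbasis := E1 | W1 | W2 | W3 | X | X1 | X2 | X3.

Definition CKb_to_ord (b : CKbasis) : 'I_8 :=
  match b with
  | E1 => @Ordinal 8 0 isT | W1 => @Ordinal 8 1 isT | W2 => @Ordinal 8 2 isT
  | W3 => @Ordinal 8 3 isT | X => @Ordinal 8 4 isT | X1 => @Ordinal 8 5 isT
  | X2 => @Ordinal 8 6 isT | X3 => @Ordinal 8 7 isT end.
Definition CKb_of_ord (i : 'I_8) : CKbasis :=
  match val i with
  | 0 => E1 | 1 => W1 | 2 => W2 | 3 => W3 | 4 => X | 5 => X1 | 6 => X2 | _ => X3 end.
Lemma CKb_to_ordK : cancel CKb_to_ord CKb_of_ord. Proof. by case. Qed.
HB.instance Definition _ := Equality.copy CKbasis (can_type CKb_to_ordK).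
HB.instance Definition _ := Choice.copy CKbasis (can_type CKb_to_ordK).
HB.instance Definition _ := Countable.copy CKbasis (can_type CKb_to_ordK).
HB.instance Definition _ := Finite.copy CKbasis (can_type CKb_to_ordK).

Definition CKodd (b : CKbasis) : bool :=
  match b with X | X1 | X2 | X3 => true | _ => false end.

Definition CKdeg (b : CKbasis) : bool * bool :=
  match b with
  | E1 | X => (false, false) | W1 | X1 => (true, false)
  | W2 | X2 => (false, true) | W3 | X3 => (true, true) end.

Section CK.
Variables (F : fieldType) (Z : comAlgType F) (delta : Z -> Z).

Definition CK := {ffun CKbasis -> Z}.

Definition CKmono (f : Z) (b : CKbasis) : CK := [ffun c => if c == b then f else 0].
Definition CKone : CK := CKmono 1 E1.

Definition CKzscale (f : Z) (u : CK) : CK := [ffun c => f * u c].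

Definition CKcross (i j : CKbasis) : Z * CKbasis :=
  match i, j with
  | X1, X2 => (1, X3) | X2, X1 => (-1, X3)
  | X1, X3 => (1, X2) | X3, X1 => (-1, X2)
  | X3, X2 => (1, X1) | X2, X3 => (-1, X1)
  | _, _ => (0, X1) end.

Definition w_of (b : CKbasis) : CKbasis :=
  match b with X1 => W1 | X2 => W2 | X3 => W3 | _ => b end.
Definition x_of (b : CKbasis) : CKbasis :=
  match b with W1 => X1 | W2 => X2 | W3 => X3 | _ => b end.

Definition CKmul_even_left (f : Z) (b : CKbasis) (g : Z) (c : CKbasis) : CK :=
  match b, c with
  (* even x even: J_0 = (F1 + Fw1 + Fw2 + Fw3) (x) Z *)
  | E1, _ => CKmono (f * g) c
  | W1, E1 | W2, E1 | W3, E1 => CKmono (f * g) b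
  | W1, W1 | W2, W2 => CKmono (f * g) E1
  | W3, W3 => CKmono (- (f * g)) E1
  | W1, W2 | W1, W3 | W2, W1 | W2, W3 | W3, W1 | W3, W2 => 0
  | W1, X | W2, X | W3, X => CKmono (delta f * g) (x_of b)
  | W1, _ | W2, _ | W3, _ =>
      let: (s, k) := CKcross (x_of b) c in CKmono (- (s * (f * g))) k
  | _, _ => 0 end.

Definition CKmul_odd_odd (f : Z) (b : CKbasis) (g : Z) (c : CKbasis) : CK :=
  match b, c with
  | X, X => CKmono (delta f * g - f * delta g) E1
  | X, _ => CKmono (- (f * g)) (w_of c)
  | _, X => CKmono (f * g) (w_of b)
  | _, _ => 0 end.

(* product of monomials; odd x even is obtained by supercommutativity
   ab = (-1)^{|a||b|} ba = ba *)
Definition CKmul_mono (f : Z) (b : CKbasis) (g : Z) (c : CKbasis) : CK :=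
  match CKodd b, CKodd c with
  | false, _ => CKmul_even_left f b g c
  | true, false => CKmul_even_left g c f b
  | true, true => CKmul_odd_odd f b g c end.

Definition CKmul (u v : CK) : CK :=
  \sum_(b : CKbasis) \sum_(c : CKbasis) CKmul_mono (u b) b (v c) c.

Definition CKeven (u : CK) : Prop := forall b, CKodd b -> u b = 0.
Definition CKoddpart (u : CK) : Prop := forall b, ~~ CKodd b -> u b = 0.
Definition CKin2 (g h : bool * bool) (u : CK) : Prop :=
  forall b, CKdeg b != g -> CKdeg b != h -> u b = 0.

Definition CKautomorphism (r : CK -> CK) : Prop :=
  [/\ bijective r,
      forall (a : F) (u v : CK), r (a *: u + v) = a *: r u + r v &
      forall u v : CK, r (CKmul u v) = CKmul (r u) (r v)].

Definition CKeven_map (r : CK -> CK) : Prop :=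
  (forall u, CKeven u -> CKeven (r u)) /\ (forall u, CKoddpart u -> CKoddpart (r u)).

Definition CKZlinear (r : CK -> CK) : Prop :=
  (forall u v, r (u + v) = r u + r v) /\
  (forall (f : Z) u, r (CKzscale f u) = CKzscale f (r u)).

End CK.

Definition is_derivation (F : fieldType) (Z : comAlgType F) (delta : Z -> Z) : Prop :=
  (forall (a : F) (f g : Z), delta (a *: f + g) = a *: delta f + delta g) /\
  (forall f g : Z, delta (f * g) = delta f * g + f * delta g).

(* Z delta(Z) = Z: every element of Z is an F-linear combination of products
   f delta(g) (scalars can be absorbed in f) *)
Definition Zdelta_full (F : fieldType) (Z : comAlgType F) (delta : Z -> Z) : Prop :=
  forall z : Z, exists s : seq (Z * Z), z = \sum_(p <- s) p.1 * delta p.2.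

(* ---------- elements of S_4 (points 1,2,3,4 are the ordinals 0,1,2,3) ---- *)
Definition p1 : 'I_4 := @Ordinal 4 0 isT.
Definition p2 : 'I_4 := @Ordinal 4 1 isT.
Definition p3 : 'I_4 := @Ordinal 4 2 isT.
Definition p4 : 'I_4 := @Ordinal 4 3 isT.

(* mathcomp convention: (s * t) x = t (s x) *)
Definition S4_tau1 : 'S_4 := tperm p1 p2 * tperm p3 p4.
Definition S4_tau2 : 'S_4 := tperm p2 p3 * tperm p4 p1.
Definition S4_phi  : 'S_4 := tperm p1 p2 * tperm p1 p3.
Definition S4_tau  : 'S_4 := tperm p1 p2.

Lemma S4_phi_spec : [/\ S4_phi p1 = p2, S4_phi p2 = p3, S4_phi p3 = p1 & S4_phi p4 = p4].
Proof. by rewrite /S4_phi !permM !permE; split; apply/val_inj. Qed.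

(* Main.v *)
Require Import Defs.
From HB Require Import structures.
From mathcomp Require Import all_boot all_order all_algebra all_fingroup.
Set Implicit Arguments. Unset Strict Implicit. Unset Printing Implicit Defensive.
Import GRing.Theory.

Definition bidx (b : CKbasis) : nat :=
  match b with E1 => 0 | W1 => 1 | W2 => 2 | W3 => 3 | X => 4 | X1 => 5 | X2 => 6 | X3 => 7 end.
Definition bof (n : nat) : CKbasis :=
  match n with 0 => E1 | 1 => W1 | 2 => W2 | 3 => W3 | 4 => X | 5 => X1 | 6 => X2 | _ => X3 end.
Definition cklist := [:: E1; W1; W2; W3; X; X1; X2; X3].

Definition ninv (k : seq nat) : nat :=
  size [seq ij <- [seq (i, j) | i <- iota 0 4, j <- iota 0 4] |
        (ij.1 < ij.2) && (nth 0 k ij.2 < nth 0 k ij.1)].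
Definition sgk k := odd (ninv k).
Definition Pv (a b : nat) : nat * bool :=
  if a == 3 then (b, false) else if b == 3 then (a, false) else (3 - a - b, true).
Definition ce (m : nat) := if m < 2 then 1 else 0.
Definition vimg k m := let: (j, n) := Pv (nth 0 k m) (nth 0 k 3) in (j, addb n (sgk k)).
Definition expw k m := let: (j, n) := vimg k m in ((if n then 2 else 0) + ce j + 4 - ce m) %% 4.
Definition fwd k (i : nat) : nat * nat :=
  if i == 0 then (0, 0) else if i == 4 then (4, 0) else
  if i < 4 then ((vimg k (i - 1)).1 + 1, expw k (i - 1))
  else ((vimg k (i - 5)).1 + 5, expw k (i - 5)).
Definition tgt k b := bof (fwd k (bidx b)).1.
Definition ek k b := (fwd k (bidx b)).2.

Definition allkeys : seq (seq nat) :=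
  [seq k <- foldr (fun _ acc => [seq a :: l | a <- iota 0 4, l <- acc]) [:: [::]] (iota 0 4)
   | uniq k].
Definition kcomp (ks kt : seq nat) := map (fun a => nth 0 kt a) ks.

Definition compchk (ks kt : seq nat) :=
  all (fun b => (bidx (tgt (kcomp ks kt) b) == bidx (tgt kt (tgt ks b))) &&
                (ek (kcomp ks kt) b == (ek ks b + ek kt (tgt ks b)) %% 4)) cklist.

Definition crossS (i j : CKbasis) : nat * nat * CKbasis :=
  match i, j with
  | X1, X2 => (1, 2, X3) | X2, X1 => (1, 0, X3)
  | X1, X3 => (1, 2, X2) | X3, X1 => (1, 0, X2)
  | X3, X2 => (1, 2, X1) | X2, X3 => (1, 0, X1)
  | _, _ => (0, 0, E1) end.
Definition sel (b c : CKbasis) : nat * nat * CKbasis :=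
  match b, c with
  | E1, _ => (1, 0, c)
  | W1, E1 | W2, E1 | W3, E1 => (1, 0, b)
  | W1, W1 | W2, W2 => (1, 0, E1)
  | W3, W3 => (1, 2, E1)
  | W1, W2 | W1, W3 | W2, W1 | W2, W3 | W3, W1 | W3, W2 => (0, 0, E1)
  | W1, X | W2, X | W3, X => (2, 0, x_of b)
  | W1, _ | W2, _ | W3, _ => crossS (x_of b) c
  | _, _ => (0, 0, E1) end.
Definition soo (b c : CKbasis) : nat * nat * CKbasis :=
  match b, c with
  | X, X => (4, 0, E1)
  | X, _ => (1, 2, w_of c)
  | _, X => (1, 0, w_of b)
  | _, _ => (0, 0, E1) end.
Definition swapk (t : nat * nat * CKbasis) :=
  let: (kd, e, i) := t in (if kd == 2 then 3 else kd, e, i).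
Definition smul (b c : CKbasis) : nat * nat * CKbasis :=
  match CKodd b, CKodd c with
  | false, _ => sel b c
  | true, false => swapk (sel c b)
  | true, true => soo b c end.

Definition mulchk k :=
  all (fun b => all (fun c =>
    let: (k1, e1, i1) := smul b c in
    let: (k2, e2, i2) := smul (tgt k b) (tgt k c) in
    ((k1 == 0) && (k2 == 0)) ||
    [&& k1 == k2, bidx (tgt k i1) == bidx i2 &
        (e1 + ek k i1) %% 4 == (e2 + ek k b + ek k c) %% 4]) cklist) cklist.

Definition injchk (ks kt : seq nat) :=
  all (fun b => (bidx (tgt ks b) == bidx (tgt kt b)) && (ek ks b %% 4 == ek kt b %% 4)) cklist
  ==> (ks == kt).
Definition evenchk k := all (fun b => CKodd (tgt k b) == CKodd b) cklist.

Definition allchk :=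
  [&& size allkeys == 24,
      all (fun ks => all (fun kt => compchk ks kt && injchk ks kt) allkeys) allkeys,
      all mulchk allkeys & all evenchk allkeys].
Lemma allchk_ok : allchk. Proof. vm_compute. reflexivity. Qed.
Arguments tgt : simpl never.
Arguments ek : simpl never.
Arguments fwd : simpl never.


Definition key (s : 'S_4) : seq nat :=
  [:: nat_of_ord (s p1); nat_of_ord (s p2); nat_of_ord (s p3); nat_of_ord (s p4)].

Lemma ord4_cases (x : 'I_4) : [\/ x = p1, x = p2, x = p3 | x = p4].
Proof.
case: x => [[|[|[|[|m]]]] Hm] //.
- by constructor 1; apply/val_inj.
- by constructor 2; apply/val_inj.
- by constructor 3; apply/val_inj.
- by constructor 4; apply/val_inj.
Qed.

Lemma key_nth (t : 'S_4) (x : 'I_4) : nth 0 (key t) x = t x.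
Proof. by case: (ord4_cases x) => ->. Qed.

Lemma keyM s t : key (s * t)%g = kcomp (key s) (key t).
Proof. by rewrite /key /kcomp /= !permM !key_nth. Qed.

Lemma key_inj s t : key s = key t -> s = t.
Proof.
move=> [h1 h2 h3 h4]; apply/permP => x.
by case: (ord4_cases x) => ->; apply/val_inj.
Qed.

Lemma key1 : key 1%g = [:: 0; 1; 2; 3].
Proof. by rewrite /key !perm1. Qed.

Lemma key_uniq s : uniq (key s).
Proof.
have -> : key s = map (fun x => nat_of_ord (s x)) [:: p1; p2; p3; p4] by [].
rewrite map_inj_uniq //; move=> x y /val_inj; exact: perm_inj.
Qed.

Lemma key_in s : key s \in allkeys.
Proof.
have := key_uniq s; rewrite /key.
case: (s p1) => a Ha; case: (s p2) => b Hb; case: (s p3) => c Hc; case: (s p4) => d Hd /=.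
move: a Ha b Hb c Hc d Hd.
do 4 (case=> [|[|[|[|?]]]] // ?); by vm_compute.
Qed.

Lemma key_tau1 : key S4_tau1 = [:: 1; 0; 3; 2].
Proof. by rewrite /key /S4_tau1 !permM !permE. Qed.
Lemma key_tau2 : key S4_tau2 = [:: 3; 2; 1; 0].
Proof. by rewrite /key /S4_tau2 !permM !permE. Qed.
Lemma key_tau : key S4_tau = [:: 1; 0; 2; 3].
Proof. by rewrite /key /S4_tau !permE. Qed.
Lemma key_phi : key S4_phi = [:: 1; 2; 0; 3].
Proof. by rewrite /key; case: S4_phi_spec => -> -> -> ->. Qed.

Local Open Scope ring_scope.

Section Main.
Variables (F : fieldType) (Z : comAlgType F) (delta : Z -> Z) (i : F).
Hypothesis hi : i ^+ 2 = -1.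
Hypothesis hd : is_derivation delta.

Notation mono := (@CKmono F Z).

Lemma deltaD f g : delta (f + g) = delta f + delta g.
Proof. by have := hd.1 1 f g; rewrite !scale1r. Qed.
Lemma delta0 : delta 0 = 0.
Proof. by apply: (addrI (delta 0)); rewrite -deltaD !addr0. Qed.
Lemma deltaZ a f : delta (a *: f) = a *: delta f.
Proof. by have := hd.1 a f 0; rewrite !addr0 delta0 addr0. Qed.

Lemma monoE h b c : mono h b c = if c == b then h else 0.
Proof. by rewrite /CKmono ffunE. Qed.
Lemma mono0 b : mono 0 b = 0.
Proof. by apply/ffunP => c; rewrite /CKmono !ffunE; case: ifP. Qed.
Lemma monoD h h' b : mono (h + h') b = mono h b + mono h' b.
Proof. by apply/ffunP => c; rewrite /CKmono !ffunE; case: ifP; rewrite ?addr0. Qed.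
Lemma monoN h b : mono (- h) b = - mono h b.
Proof. by apply/ffunP => c; rewrite /CKmono !ffunE; case: ifP; rewrite ?oppr0. Qed.
Lemma monoZ (a : F) h b : mono (a *: h) b = a *: mono h b.
Proof. by apply/ffunP => c; rewrite /CKmono !ffunE; case: ifP; rewrite ?scaler0. Qed.

Definition sterm (kd : nat) (f g : Z) : Z :=
  match kd with 1 => f * g | 2 => delta f * g | 3 => delta g * f
  | _ => delta f * g - f * delta g end.
Definition sint (f g : Z) (K : nat * nat * CKbasis) : CK Z :=
  let: (kd, e, j) := K in if kd is 0 then 0 else mono (i ^+ e *: sterm kd f g) j.

Lemma mul_sint f b g c : CKmul_mono delta f b g c = sint f g (smul b c).
Proof.
case: b; case: c; rewrite /CKmul_mono /smul /= /sint /sterm /=;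
  rewrite ?hi ?expr0 ?scale1r ?scaleN1r ?mul1r ?mulN1r ?mul0r ?oppr0 ?opprK ?mono0 //.
all: by rewrite mulrC.
Qed.

Lemma sint0l g K : sint 0 g K = 0.
Proof.
case: K => [[[|[|[|[|kd]]]] e] j] //=;
  by rewrite ?delta0 ?mul0r ?mulr0 ?subr0 ?scaler0 ?mono0.
Qed.
Lemma sint0r f K : sint f 0 K = 0.
Proof.
case: K => [[[|[|[|[|kd]]]] e] j] //=;
  by rewrite ?delta0 ?mul0r ?mulr0 ?subr0 ?scaler0 ?mono0.
Qed.
Lemma sintDl f1 f2 g K : sint (f1 + f2) g K = sint f1 g K + sint f2 g K.
Proof.
case: K => [[[|[|[|[|kd]]]] e] j] /=; rewrite ?addr0 // -monoD -scalerDr;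
  congr (mono (_ *: _) _); rewrite ?deltaD ?mulrDl ?mulrDr //.
by rewrite opprD addrACA.
Qed.
Lemma sintDr f g1 g2 K : sint f (g1 + g2) K = sint f g1 K + sint f g2 K.
Proof.
case: K => [[[|[|[|[|kd]]]] e] j] /=; rewrite ?addr0 // -monoD -scalerDr;
  congr (mono (_ *: _) _); rewrite ?deltaD ?mulrDl ?mulrDr //.
by rewrite opprD addrACA.
Qed.
Lemma sintZ (a a' : F) f g K : sint (a *: f) (a' *: g) K = (a * a') *: sint f g K.
Proof.
case: K => [[[|[|[|[|kd]]]] e] j] /=; rewrite ?scaler0 // -monoZ;
  congr (mono _ _); rewrite [RHS]scalerA [_ * i ^+ e]mulrC -scalerA; congr (_ *: _);
  rewrite ?deltaZ -?scalerAl -?scalerAr ?scalerA ?scalerBr ?(mulrC a' a) //.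
Qed.

Lemma CKmul_mono_sint (u v : CK Z) :
  CKmul delta u v = \sum_b \sum_c sint (u b) (v c) (smul b c).
Proof. by apply: eq_bigr => b _; apply: eq_bigr => c _; rewrite mul_sint. Qed.

Lemma CKmulDl v : {morph (fun u => CKmul delta u v) : x y / x + y}.
Proof.
move=> x y /=; rewrite !CKmul_mono_sint -big_split; apply: eq_bigr => b _.
rewrite -big_split; apply: eq_bigr => c _; by rewrite ffunE sintDl.
Qed.
Lemma CKmul0l v : CKmul delta 0 v = 0.
Proof.
rewrite CKmul_mono_sint big1 // => b _; rewrite big1 // => c _; by rewrite ffunE sint0l.
Qed.
Lemma CKmulDr u : {morph (fun v => CKmul delta u v) : x y / x + y}.
Proof.
move=> x y /=; rewrite !CKmul_mono_sint -big_split; apply: eq_bigr => b _.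
rewrite -big_split; apply: eq_bigr => c _; by rewrite ffunE sintDr.
Qed.
Lemma CKmul0r u : CKmul delta u 0 = 0.
Proof.
rewrite CKmul_mono_sint big1 // => b _; rewrite big1 // => c _; by rewrite ffunE sint0r.
Qed.
Lemma CKmul_suml (I : finType) (x : I -> CK Z) v :
  CKmul delta (\sum_j x j) v = \sum_j CKmul delta (x j) v.
Proof. exact: (big_morph _ (CKmulDl v) (CKmul0l v)). Qed.
Lemma CKmul_sumr (I : finType) (x : I -> CK Z) u :
  CKmul delta u (\sum_j x j) = \sum_j CKmul delta u (x j).
Proof. exact: (big_morph _ (CKmulDr u) (CKmul0r u)). Qed.

Lemma CKmul_mono2 f b g c : CKmul delta (mono f b) (mono g c) = sint f g (smul b c).
Proof.
rewrite CKmul_mono_sint (bigD1 b) //= [X in _ + X]big1 ?addr0; last first.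
  move=> b' /negbTE hb; rewrite big1 // => c' _; by rewrite monoE hb sint0l.
rewrite (bigD1 c) //= [X in _ + X]big1 ?addr0; last first.
  move=> c' /negbTE hc; by rewrite [mono g c c']monoE hc sint0r.
by rewrite !monoE !eqxx.
Qed.

Definition rhoK (k : seq nat) (u : CK Z) : CK Z :=
  \sum_(b : CKbasis) mono (i ^+ ek k b *: u b) (tgt k b).

Lemma rhoD k : {morph rhoK k : x y / x + y}.
Proof.
move=> x y; rewrite /rhoK -big_split; apply: eq_bigr => b _.
by rewrite ffunE scalerDr monoD.
Qed.
Lemma rho0 k : rhoK k 0 = 0.
Proof. by rewrite /rhoK big1 // => b _; rewrite ffunE scaler0 mono0. Qed.
Lemma rhoZ k (a : F) u : rhoK k (a *: u) = a *: rhoK k u.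
Proof.
rewrite /rhoK scaler_sumr; apply: eq_bigr => b _.
by rewrite ffunE scalerA mulrC -scalerA monoZ.
Qed.
Lemma rho_sum k (I : finType) (x : I -> CK Z) :
  rhoK k (\sum_j x j) = \sum_j rhoK k (x j).
Proof. exact: (big_morph _ (rhoD k) (rho0 k)). Qed.
Lemma rho_mono k h b : rhoK k (mono h b) = mono (i ^+ ek k b *: h) (tgt k b).
Proof.
rewrite /rhoK (bigD1 b) //= [X in _ + X]big1 ?addr0; first by rewrite monoE eqxx.
by move=> c /negbTE hc; rewrite monoE hc scaler0 mono0.
Qed.
Lemma rhoE k u c : rhoK k u c = \sum_b (if c == tgt k b then i ^+ ek k b *: u b else 0).
Proof. by rewrite /rhoK sum_ffunE; apply: eq_bigr => b _; rewrite monoE. Qed.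

Lemma i4 : i ^+ 4 = 1.
Proof. by rewrite (exprM i 2 2) hi expr2 mulrNN mulr1. Qed.
Lemma imod n : i ^+ (n %% 4) = i ^+ n.
Proof. exact: expr_mod i4. Qed.

Lemma bidx_inj : injective bidx.
Proof. by case; case. Qed.

Lemma rho_mul k : mulchk k -> forall u v,
  rhoK k (CKmul delta u v) = CKmul delta (rhoK k u) (rhoK k v).
Proof.
move=> /allP hk u v.
rewrite [CKmul delta u v]CKmul_mono_sint rho_sum [rhoK k u]/rhoK CKmul_suml.
apply: eq_bigr => b _.
rewrite rho_sum [rhoK k v]/rhoK CKmul_sumr; apply: eq_bigr => c _.
rewrite CKmul_mono2 sintZ.
have /allP := hk b (ltac:(by case: b)) => /(_ c (ltac:(by case: c))).
case: (smul b c) => [[k1 e1] i1]; case: (smul _ _) => [[k2 e2] i2].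
case/orP => [/andP[/eqP -> /eqP ->]| /and3P[/eqP <- /eqP hi1 /eqP he]].
  by rewrite /= rho0 scaler0.
case: k1 => [|k1] /=; first by rewrite rho0 scaler0.
rewrite rho_mono -monoZ (bidx_inj hi1); congr (mono _ _).
rewrite !scalerA -!exprD -imod addnC he imod; congr (_ ^+ _ *: _).
by rewrite [RHS]addnC addnA.
Qed.

Lemma rho_comp ks kt : compchk ks kt -> forall u,
  rhoK (kcomp ks kt) u = rhoK kt (rhoK ks u).
Proof.
move=> /allP h u; rewrite [rhoK ks u]/rhoK rho_sum; apply: eq_bigr => b _.
rewrite rho_mono; case/andP: (h b (ltac:(by case: b))) => /eqP/bidx_inj -> /eqP ->.
by rewrite imod scalerA -exprD addnC.
Qed.

Lemma rho_id u : rhoK [:: 0; 1; 2; 3] u = u.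
Proof.
have ht b : tgt [:: 0; 1; 2; 3] b = b by case: b.
have he b : ek [:: 0; 1; 2; 3] b = 0%N by case: b.
apply/ffunP => c; rewrite rhoE (bigD1 c) //= [X in _ + X]big1 ?addr0.
  by rewrite ht he eqxx expr0 scale1r.
by move=> b hb; rewrite ht eq_sym (negbTE hb).
Qed.

Lemma rho_even k : evenchk k -> CKeven_map (rhoK k).
Proof.
move=> /allP h; split=> u hu c hc; rewrite rhoE big1 // => b _;
  case: eqP => [Hc|] //;
  (have hb : CKodd b = CKodd c by rewrite Hc; apply/esym/eqP/h; clear Hc hu hc; case: b);
  by rewrite hu ?scaler0 // hb.
Qed.

Lemma rho_Zlin k : CKZlinear (rhoK k).
Proof.
split; first exact: rhoD.
move=> f u; apply/ffunP => c; rewrite ffunE !rhoE mulr_sumr; apply: eq_bigr => b _.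
by case: eqP; rewrite ?mulr0 // ffunE scalerAr.
Qed.


Hypothesis h2 : (2%:R : F) != 0.

Lemma i_neq0 : i != 0.
Proof. apply/eqP => h0; move: hi; rewrite h0 expr2 mulr0 => /eqP; by rewrite eq_sym oppr_eq0 oner_eq0. Qed.

Lemma m1_neq1 : (-1 : F) != 1.
Proof.
apply: contraNneq h2 => h; by rewrite -[2%:R]/(1 + 1 : F) -{1}h addNr.
Qed.

Lemma ipow1 n : (0 < n < 4)%N -> i ^+ n != 1.
Proof.
case: n => [|[|[|[|n]]]] // _.
- by apply: contra_neq m1_neq1; rewrite expr1 => h; rewrite -hi h expr1n.
- by rewrite hi m1_neq1.
- apply: contra_neq m1_neq1 => h.
  have hi1 : i = 1 by have := i4; rewrite exprS h mulr1.
  by rewrite -hi hi1 expr1n.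
Qed.

Lemma ipow_inj a b : (a < 4)%N -> (b < 4)%N -> i ^+ a = i ^+ b -> a = b.
Proof.
have gen : forall a b, (a <= b)%N -> (b < 4)%N -> i ^+ a = i ^+ b -> a = b.
  move=> x y hxy hy; rewrite -(subnKC hxy) exprD -{1}(mulr1 (i ^+ x)).
  move/(mulfI (expf_neq0 x i_neq0)) => h1.
  case: (posnP (y - x)) => [->|hp]; first by rewrite addn0.
  have hlt : (y - x < 4)%N by apply: leq_ltn_trans (leq_subr x y) hy.
  have := @ipow1 (y - x)%N; rewrite hp hlt => /(_ isT).
  by rewrite -h1 eqxx.
move=> ha hb h; case: (leqP a b) => hab; first exact: gen.
by apply/esym/gen => //; exact: ltnW.
Qed.

Lemma mono_inj1 t1 t2 e1 e2 :
  mono (i ^+ e1 *: (1 : Z)) t1 = mono (i ^+ e2 *: 1) t2 -> t1 = t2 /\ (e1 %% 4 = e2 %% 4)%N.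
Proof.
move=> e.
have hne : forall e, i ^+ e *: (1 : Z) != 0.
  by move=> e'; rewrite scaler_eq0 negb_or expf_neq0 ?i_neq0 ?oner_eq0.
have ht : t1 = t2.
  move/ffunP: (e) => /(_ t1).
  rewrite !monoE eqxx; case: eqP => [//|_] /eqP.
  by rewrite (negbTE (hne _)).
split=> //; apply: ipow_inj; rewrite ?ltn_mod //.
move/ffunP: (e) => /(_ t2).
rewrite !monoE ht eqxx => /eqP.
rewrite -subr_eq0 -scalerBl scaler_eq0 oner_eq0 orbF subr_eq0 => /eqP.
by rewrite !imod.
Qed.

Lemma rho_injk ks kt : injchk ks kt -> rhoK ks =1 rhoK kt -> ks = kt.
Proof.
move=> hchk h; apply/eqP; apply: (implyP hchk); apply/allP => b _.
have := h (mono 1 b); rewrite !rho_mono.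
move: (tgt ks b) (tgt kt b) (ek ks b) (ek kt b) => t1 t2 e1 e2 /mono_inj1 [-> ->].
by rewrite !eqxx.
Qed.

Lemma decomp (u : CK Z) : u = \sum_b mono (u b) b.
Proof.
apply/ffunP => c; rewrite sum_ffunE (bigD1 c) //= monoE eqxx big1 ?addr0 //.
by move=> b hb; rewrite monoE eq_sym (negbTE hb).
Qed.

Lemma rho_fix k (u : CK Z) : (forall b, mono (i ^+ ek k b *: u b) (tgt k b) = mono (u b) b) ->
  rhoK k u = u.
Proof. by move=> h; rewrite {2}(decomp u) /rhoK; apply: eq_bigr => b _; rewrite h. Qed.

Lemma rho_neg k (u : CK Z) : (forall b, mono (i ^+ ek k b *: u b) (tgt k b) = mono (- u b) b) ->
  rhoK k u = - u.
Proof.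
move=> h; rewrite {2}(decomp u) /rhoK -sumrN; apply: eq_bigr => b _.
by rewrite h -scaleN1r monoZ scaleN1r.
Qed.


Ltac red_data := repeat match goal with
  | |- context [ek ?k ?b] => let v := eval vm_compute in (ek k b) in change (ek k b) with v
  | |- context [tgt ?k ?b] => let v := eval vm_compute in (tgt k b) in change (tgt k b) with v
  end.

Lemma main_aux :
  let one : CK Z := CKone Z in
  let v1 : CK Z := i *: CKmono 1 W1 in
  let v2 : CK Z := i *: CKmono 1 W2 in
  let v3 : CK Z := CKmono 1 W3 in
  let y  : CK Z := CKmono 1 X in
  let y1 : CK Z := i *: CKmono 1 X1 in
  let y2 : CK Z := i *: CKmono 1 X2 in
  let y3 : CK Z := CKmono 1 X3 in
  exists rho : 'S_4 -> CK Z -> CK Z,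
    (forall (s t : 'S_4) (u : CK Z), rho (s * t)%g u = rho t (rho s u)) /\
    (forall s t : 'S_4, rho s =1 rho t -> s = t) /\
    (forall s : 'S_4,
        CKautomorphism delta (rho s) /\ CKeven_map (rho s) /\ CKZlinear (rho s)) /\
    (forall u, CKin2 (false, false) (true, true) u -> rho S4_tau1 u = u) /\
    (forall u, CKin2 (true, false) (false, true) u -> rho S4_tau1 u = - u) /\
    (forall u, CKin2 (false, false) (true, false) u -> rho S4_tau2 u = u) /\
    (forall u, CKin2 (false, true) (true, true) u -> rho S4_tau2 u = - u) /\
    (rho S4_phi one = one /\ rho S4_phi y = y /\
     rho S4_phi v1 = v2 /\ rho S4_phi v2 = v3 /\ rho S4_phi v3 = v1 /\
     rho S4_phi y1 = y2 /\ rho S4_phi y2 = y3 /\ rho S4_phi y3 = y1) /\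
    (rho S4_tau one = one /\ rho S4_tau y = y /\
     rho S4_tau v1 = - v2 /\ rho S4_tau v2 = - v1 /\ rho S4_tau v3 = - v3 /\
     rho S4_tau y1 = - y2 /\ rho S4_tau y2 = - y1 /\ rho S4_tau y3 = - y3).
Proof.
cbv zeta.
case/and4P: allchk_ok => _ /allP hpair /allP hmul /allP hev.
have hcomp s t : compchk (key s) (key t).
  by have /allP /(_ _ (key_in t)) /andP[] := hpair _ (key_in s).
have hinj s t : injchk (key s) (key t).
  by have /allP /(_ _ (key_in t)) /andP[] := hpair _ (key_in s).
have hom s t u : rhoK (key (s * t)%g) u = rhoK (key t) (rhoK (key s) u).
  by rewrite keyM (rho_comp (hcomp s t)).
exists (fun s => rhoK (key s)); split; first exact: hom.
split; first by move=> s t h; apply: key_inj; apply: rho_injk (hinj s t) h.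
split.
  move=> s; split; last split.
  - split.
    + exists (rhoK (key s^-1)%g) => u; rewrite -hom.
        by rewrite mulgV key1 rho_id.
      by rewrite mulVg key1 rho_id.
    + by move=> a u v; rewrite rhoD rhoZ.
    + by move=> u v; apply: rho_mul; apply: hmul; apply: key_in.
  - by apply: rho_even; apply: hev; apply: key_in.
  - exact: rho_Zlin.
rewrite key_tau1 key_tau2 key_phi key_tau.
split.
  move=> u hu; apply: rho_fix => b; case: b; red_data;
    rewrite ?expr0 ?scale1r // hu ?scaler0 //.
split.
  move=> u hu; apply: rho_neg => b; case: b; red_data;
    rewrite ?expr0 ?scale1r ?hi ?scaleN1r // hu ?scaler0 ?oppr0 //.
split.
  move=> u hu; apply: rho_fix => b; case: b; red_data;
    rewrite ?expr0 ?scale1r // hu ?scaler0 //.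
split.
  move=> u hu; apply: rho_neg => b; case: b; red_data;
    rewrite ?expr0 ?scale1r ?hi ?scaleN1r // hu ?scaler0 ?oppr0 //.
rewrite /CKone.
by do ! split; rewrite ?rhoZ rho_mono; red_data;
  rewrite ?expr0 ?expr1 ?hi ?scale1r ?scaleN1r ?monoN ?scalerN ?monoZ ?scalerA -?exprS ?i4 ?scale1r.
Qed.

End Main.

Theorem theorem5p1 (F : fieldType) (Z : comAlgType F) (delta : Z -> Z)
  (char_not2 : (2%:R : F) != 0)
  (hdelta : is_derivation delta)
  (hfull : Zdelta_full delta)
  (sqrtm1 : F) (hsqrtm1 : sqrtm1 ^+ 2 = -1) :
  let one : CK Z := CKone Z in
  let v1 : CK Z := sqrtm1 *: CKmono 1 W1 in
  let v2 : CK Z := sqrtm1 *: CKmono 1 W2 in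
  let v3 : CK Z := CKmono 1 W3 in
  let y  : CK Z := CKmono 1 X in
  let y1 : CK Z := sqrtm1 *: CKmono 1 X1 in
  let y2 : CK Z := sqrtm1 *: CKmono 1 X2 in
  let y3 : CK Z := CKmono 1 X3 in
  exists rho : 'S_4 -> CK Z -> CK Z,
    (* group homomorphism; mathcomp's product satisfies (s * t) i = t (s i),
       so s * t is the composite "t after s" *)
    (forall (s t : 'S_4) (u : CK Z), rho (s * t)%g u = rho t (rho s u)) /\
    (* injective *)
    (forall s t : 'S_4, rho s =1 rho t -> s = t) /\
    (* image: even Z-linear automorphisms of J *)
    (forall s : 'S_4,
        CKautomorphism delta (rho s) /\ CKeven_map (rho s) /\ CKZlinear (rho s)) /\
    (* tau1 = (1 2)(3 4) *)
    (forall u, CKin2 (false, false) (true, true) u -> rho S4_tau1 u = u) /\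
    (forall u, CKin2 (true, false) (false, true) u -> rho S4_tau1 u = - u) /\
    (* tau2 = (2 3)(4 1) *)
    (forall u, CKin2 (false, false) (true, false) u -> rho S4_tau2 u = u) /\
    (forall u, CKin2 (false, true) (true, true) u -> rho S4_tau2 u = - u) /\
    (* phi = (1 2 3) *)
    (rho S4_phi one = one /\ rho S4_phi y = y /\
     rho S4_phi v1 = v2 /\ rho S4_phi v2 = v3 /\ rho S4_phi v3 = v1 /\
     rho S4_phi y1 = y2 /\ rho S4_phi y2 = y3 /\ rho S4_phi y3 = y1) /\
    (* tau = (1 2) *)
    (rho S4_tau one = one /\ rho S4_tau y = y /\
     rho S4_tau v1 = - v2 /\ rho S4_tau v2 = - v1 /\ rho S4_tau v3 = - v3 /\
     rho S4_tau y1 = - y2 /\ rho S4_tau y2 = - y1 /\ rho S4_tau y3 = - y3).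
Proof.
exact: (@main_aux F Z delta sqrtm1 hsqrtm1 hdelta char_not2).
Qed.
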